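(* Let $G=(I_0\cup I_1,E)$ be a bipartite graph with bipartition $(I_0,I_1)$ such that $d(v)\ge 3$ for every $v\in I_1$, and let $d_1,d_2$ be real numbers with $0<d_1<d_2$. Then $G$ admits a proper $\{-d_1,0,d_2\}$-edge weighting.
   Context: All graphs are simple, finite and undirected; $d(v)$ denotes the degree of $v$. For a graph $G=(V,E)$ and a set $Q\subset\mathbb{R}$, a $Q$-edge weighting is a map $w:E\to Q$. The weighted degree of a vertex $v$ is $d_w(v)=\sum_{e\ni v}w(e)$. An edge $uv$ is a conflict if $d_w(u)=d_w(v)$, and $w$ is proper if it has no conflicts. *)

(* Defs.v *)
From mathcomp Require Import all_boot all_order all_algebra.
Set Implicit Arguments. Unset Strict Implicit. Unset Printing Implicit Defensive.
Import Order.TTheory GRing.Theory Num.Theory.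
Local Open Scope ring_scope.

Definition simple_graph (T : finType) (e : rel T) : Prop :=
  symmetric e /\ irreflexive e.

Definition deg (T : finType) (e : rel T) (v : T) : nat := #|[set u | e v u]|.

Definition bipartition (T : finType) (e : rel T) (I0 I1 : {set T}) : Prop :=
  [/\ I0 :&: I1 = set0, I0 :|: I1 = [set: T] &
      forall u v, e u v -> (u \in I0) && (v \in I1) || (u \in I1) && (v \in I0)].

(* An edge weighting is represented by a symmetric function w : T -> T -> R;
   only its values on edges matter.  It is a Q-edge weighting if w u v \in Q
   for every edge uv. *)
Definition edge_weighting (T : finType) (e : rel T) (R : numDomainType)
    (Q : pred R) (w : T -> T -> R) : Prop :=
  (forall u v, w u v = w v u) /\ (forall u v, e u v -> Q (w u v)).

Definition wdeg (T : finType) (e : rel T) (R : numDomainType)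
    (w : T -> T -> R) (v : T) : R := \sum_(u | e v u) w v u.

Definition proper_weighting (T : finType) (e : rel T) (R : numDomainType)
    (w : T -> T -> R) : Prop :=
  forall u v, e u v -> wdeg e w u != wdeg e w v.

(* Main.v *)
Require Import Defs.
From mathcomp Require Import all_boot all_order all_algebra.
Import Order.TTheory GRing.Theory Num.Theory.
From mathcomp Require Import ring lra zify.
From Stdlib Require Import Classical.
Set Implicit Arguments. Unset Strict Implicit.

Definition tog (T : finType) (H : {set {set T}}) (x y : T) : {set {set T}} :=
  [set s | (s \in H) (+) (s == [set x; y])].

Definition degH (T : finType) (e : rel T) (H : {set {set T}}) (v : T) : nat :=
  #|[set t | e v t && ([set v; t] \in H)]|.

Definition defect (T : finType) (e : rel T) (I1 : {set T}) H (v : T) : bool :=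
  odd (degH e H v) (+) (v \in I1).

Definition cost (T : finType) (e : rel T) (I1 : {set T}) H (v : T) : nat :=
  if defect e I1 H v then (if v \in I1 then 2 else 3) else 0.

Definition mu (T : finType) (e : rel T) (I1 : {set T}) H : nat :=
  \sum_v cost e I1 H v.

Lemma set2_eq_l (T : finType) (x t y : T) :
  t != x -> ([set x; t] == [set x; y]) = (t == y).
Proof.
move=> tx; apply/eqP/eqP => [E|->//].
have : t \in [set x; y] by rewrite -E !inE eqxx orbT.
by rewrite !inE (negbTE tx) => /eqP.
Qed.

Lemma set2_neq (T : finType) (v t x y : T) :
  v != x -> v != y -> ([set v; t] == [set x; y]) = false.
Proof.
move=> vx vy; apply/negP => /eqP E.
have : v \in [set x; y] by rewrite -E !inE eqxx.
by rewrite !inE (negbTE vx) (negbTE vy).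
Qed.

Lemma odd_card_xor (T : finType) (S S' : {set T}) (y : T) :
  (forall t, (t \in S') = (t \in S) (+) (t == y)) -> odd #|S'| = ~~ odd #|S|.
Proof.
move=> h.
case yS: (y \in S).
- have -> : S' = S :\ y.
    apply/setP => t; rewrite h !inE.
    by case: (t =P y) => [->|_]; rewrite ?yS ?addbF ?addbT //= andbT.
  by rewrite (cardsD1 y S) yS /= negbK.
- have E : S = S' :\ y.
    apply/setP => t; rewrite !inE h.
    by case: (t =P y) => [->|_]; rewrite ?yS ?addbF ?addbT //= andbT.
  have yS' : y \in S' by rewrite h yS eqxx.
  by rewrite E (cardsD1 y S') yS'.
Qed.

Lemma odd_degH_tog (T : finType) (e : rel T) H x y v :
  simple_graph e -> e x y ->
  odd (degH e (tog H x y) v) = odd (degH e H v) (+) ((v == x) || (v == y)).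
Proof.
move=> [esym eirr] exy.
have xy : x != y by apply/eqP => E; move: exy; rewrite E eirr.
have [->|vx] := eqVneq v x.
  rewrite /= addbT /degH; apply: (odd_card_xor (y:=y)) => t; rewrite !inE.
  case ext: (e x t) => /=.
    have tx : t != x by apply/eqP => E; by rewrite E eirr in ext.
    by rewrite (set2_eq_l y tx).
  by case: (t =P y) => // E; move: ext; rewrite E exy.
have [->|vy] := eqVneq v y.
  rewrite /= addbT /degH; apply: (odd_card_xor (y:=x)) => t; rewrite !inE.
  case ext: (e y t) => /=.
    have ty : t != y by apply/eqP => E; by rewrite E eirr in ext.
    by rewrite [[set x; y]]setUC (set2_eq_l x ty).
  by case: (t =P x) => // E; move: ext; rewrite E esym exy.
rewrite /= addbF /degH.
suff -> : [set t | e v t & [set v; t] \in tog H x y] = [set t | e v t & [set v; t] \in H] by [].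
apply/setP => t; rewrite !inE.
by rewrite (set2_neq t vx vy) addbF.
Qed.

Lemma defect_tog (T : finType) (e : rel T) I1 H x y v :
  simple_graph e -> e x y ->
  defect e I1 (tog H x y) v = defect e I1 H v (+) ((v == x) || (v == y)).
Proof. by move=> sg exy; rewrite /defect odd_degH_tog // addbAC. Qed.

Lemma sum_change2 (T : finType) (f g : T -> nat) x y : x != y ->
  (forall v, v != x -> v != y -> g v = f v) ->
  (\sum_v g v + f x + f y = \sum_v f v + g x + g y)%N.
Proof.
move=> xy h.
rewrite (bigD1 x) //= (bigD1 y) 1?eq_sym //= [in RHS](bigD1 x) //= [in RHS](bigD1 y) 1?eq_sym //=.
rewrite (eq_bigr f); last by move=> i /andP[ix iy]; apply: h.
lia.
Qed.

Lemma bip (T : finType) (e : rel T) (I0 I1 : {set T}) u v :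
  bipartition e I0 I1 -> e u v -> (u \in I1) = (v \notin I1).
Proof.
move=> [hcap hcup hedge] euv.
have I0c : forall x, (x \in I0) = (x \notin I1).
  move=> x; have := in_setT x; rewrite -hcup inE.
  have : x \notin I0 :&: I1 by rewrite hcap inE.
  by rewrite inE; case: (x \in I0); case: (x \in I1).
by case/orP: (hedge u v euv) => /andP[]; rewrite !I0c; case: (u \in I1); case: (v \in I1).
Qed.

Lemma good_H (T : finType) (e : rel T) (I0 I1 : {set T}) :
  simple_graph e -> bipartition e I0 I1 ->
  exists H, (forall x, defect e I1 H x -> x \in I1) /\
   (forall z z' u, z != z' -> defect e I1 H z -> defect e I1 H z' ->
      e z u -> e z' u -> False).
Proof.
move=> sg bp; have [esy eirr] := sg.
suff K : forall n (H : {set {set T}}), (mu e I1 H < n)%N ->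
  exists H, (forall x, defect e I1 H x -> x \in I1) /\
   (forall z z' u, z != z' -> defect e I1 H z -> defect e I1 H z' ->
      e z u -> e z' u -> False).
  by apply: (K (mu e I1 set0).+1 set0).
elim=> [//|n IH] H lt.
case: (classic (exists u, defect e I1 H u && (u \notin I1))) => [[u /andP[du nu]]|no1].
  have : (0 < degH e H u)%N.
    rewrite lt0n; apply/negP => /eqP d0; move: du; by rewrite /defect d0 /= (negbTE nu).
  case/card_gt0P => v; rewrite inE => /andP[euv _].
  have vI : v \in I1 by move: (bip bp euv); rewrite (negbTE nu) => /esym/negbFE.
  have uv : u != v by apply/eqP => E; move: euv; rewrite E eirr.
  apply: (IH (tog H u v)).
  have hw : (forall w, w != u -> w != v -> cost e I1 (tog H u v) w = cost e I1 H w).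
    by move=> w wu wv; rewrite /cost defect_tog // (negbTE wu) (negbTE wv) addbF.
  have E := @sum_change2 T (cost e I1 H) (cost e I1 (tog H u v)) u v uv hw.
  have cu : cost e I1 H u = 3 by rewrite /cost du (negbTE nu).
  have cu' : cost e I1 (tog H u v) u = 0 by rewrite /cost defect_tog // eqxx /= du.
  have cv : (cost e I1 H v + cost e I1 (tog H u v) v = 2)%N.
    by rewrite /cost defect_tog // eqxx orbT vI; case: (defect e I1 H v).
  rewrite /mu; move: lt; rewrite /mu; lia.
case: (classic (exists z z' u, [/\ z != z', defect e I1 H z, defect e I1 H z', e z u & e z' u]))
  => [[z [z' [u [zz' dz dz' ezu ez'u]]]]|no2].
  have zu : z != u by apply/eqP => E; move: ezu; rewrite E eirr.
  have z'u : z' != u by apply/eqP => E; move: ez'u; rewrite E eirr.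
  have euz' : e u z' by rewrite esy.
  have inI : forall x, defect e I1 H x -> x \in I1.
    move=> x dx; apply/negPn/negP => nx; apply: no1; exists x; by rewrite dx nx.
  apply: (IH (tog (tog H z u) u z')).
  have hw : (forall w, w != z -> w != z' ->
      cost e I1 (tog (tog H z u) u z') w = cost e I1 H w).
    move=> w wz wz'; rewrite /cost !defect_tog // (negbTE wz) (negbTE wz') /=.
    by rewrite orbF addbK.
  have E := @sum_change2 T (cost e I1 H) (cost e I1 (tog (tog H z u) u z')) z z' zz' hw.
  have cz : cost e I1 H z = 2 by rewrite /cost dz inI.
  have cz' : cost e I1 H z' = 2 by rewrite /cost dz' inI.
  have cz2 : cost e I1 (tog (tog H z u) u z') z = 0.
    by rewrite /cost !defect_tog // eqxx /= dz (negbTE zu) (negbTE zz').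
  have cz2' : cost e I1 (tog (tog H z u) u z') z' = 0.
    by rewrite /cost !defect_tog // eqxx orbT /= dz' eq_sym (negbTE zz') (negbTE z'u).
  rewrite /mu; move: lt; rewrite /mu; lia.
exists H; split.
  move=> x dx; apply/negPn/negP => nx; apply: no1; exists x; by rewrite dx nx.
move=> z z' u zz' dz dz' ezu ez'u; apply: no2; by exists z, z', u; split.
Qed.

Definition sel (T : finType) (e : rel T) (H : {set {set T}}) (z : T) : option (T * T) :=
  [pick p : T * T | [&& e z p.1, e z p.2, p.1 != p.2 &
                       (([set z; p.1] \in H) == ([set z; p.2] \in H))]].

Definition insel (T : finType) (e : rel T) (H : {set {set T}}) (z y : T) : bool :=
  if sel e H z is Some p then (y == p.1) || (y == p.2) else false.

Definition spec (T : finType) (e : rel T) I1 (H : {set {set T}}) (x y : T) : bool :=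
  (defect e I1 H x && insel e H x y) || (defect e I1 H y && insel e H y x).

Definition acnt (T : finType) (e : rel T) I1 (H : {set {set T}}) (x : T) : nat :=
  #|[set y | e x y && ~~ spec e I1 H x y && ([set x; y] \in H)]|.

Definition bcnt (T : finType) (e : rel T) I1 (H : {set {set T}}) (x : T) : nat :=
  #|[set y | e x y && spec e I1 H x y]|.

Definition wt (R : realFieldType) (d1 d2 : R) (T : finType) (e : rel T) I1
   (H : {set {set T}}) (x y : T) : R :=
  if spec e I1 H x y then (- d1)%R else if [set x; y] \in H then d2 else 0%R.

Lemma sel_some (T : finType) (e : rel T) (H : {set {set T}}) (z : T) :
  (3 <= #|[set u | e z u]|)%N ->
  exists p, sel e H z = Some p /\ [/\ e z p.1, e z p.2, p.1 != p.2 &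
                       (([set z; p.1] \in H) = ([set z; p.2] \in H))].
Proof.
move=> h3; rewrite /sel; case: pickP => [p /and4P[h1 h2 h3' /eqP h4]|Hn].
  by exists p.
exfalso.
have E := cardsID [set u | [set z; u] \in H] [set u | e z u].
have [K|K] : (1 < #|[set u | e z u] :&: [set u | [set z; u] \in H]|)%N \/
             (1 < #|[set u | e z u] :\: [set u | [set z; u] \in H]|)%N by lia.
- case/card_gt1P: K => x [y [hx hy xy]]; move: hx hy; rewrite !inE => /andP[ex hx] /andP[ey hy].
  by move: (Hn (x, y)); rewrite /= ex ey xy hx hy.
- case/card_gt1P: K => x [y [hx hy xy]]; move: hx hy; rewrite !inE => /andP[hx ex] /andP[hy ey].
  by move: (Hn (x, y)); rewrite /= ex ey xy (negbTE hx) (negbTE hy).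
Qed.

Local Open Scope ring_scope.

Lemma key_ineq (R : realFieldType) (d1 d2 : R) (a b a' b' : nat) :
  0 < d1 -> d1 < d2 ->
  [|| b' == b.+1, b == b'.+1, (b == b') && (odd a != odd a')
    | (b' == b.+2) && (odd a == odd a')]%N ->
  d2 *+ a - d1 *+ b != d2 *+ a' - d1 *+ b'.
Proof.
move=> h1 h12 hok; apply/eqP => E.
have h2 : 0 < d2 by lra.
have hb0 : 0 <= d1 *+ b by rewrite mulrn_wge0 // ltW.
have hb0' : 0 <= d1 *+ b' by rewrite mulrn_wge0 // ltW.
have ha0 : 0 <= d2 *+ a by rewrite mulrn_wge0 // ltW.
case: (ltngtP a a') => [lt|gt|eq].
- have [k ek] : exists k, a' = (a + k.+1)%N by exists (a' - a).-1; lia.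
  subst a'; clear lt.
  have hk : 0 <= d2 *+ k by rewrite mulrn_wge0 // ltW.
  move: E; rewrite mulrnDr.
  case/or4P: hok => [/eqP->|/eqP->|/andP[/eqP-> _]|/andP[/eqP-> hodd]];
    rewrite ?mulrS => E; try lra.
  case: k hk E hodd => [|k] hk E hodd; first by move: hodd; rewrite oddD /=; case: (odd a).
  have : 0 <= d2 *+ k by rewrite mulrn_wge0 // ltW.
  rewrite mulrS in E; lra.
- have [k ek] : exists k, a = (a' + k.+1)%N by exists (a - a').-1; lia.
  subst a; clear gt.
  have hk : 0 <= d2 *+ k by rewrite mulrn_wge0 // ltW.
  move: E; rewrite mulrnDr.
  case/or4P: hok => [/eqP->|/eqP->|/andP[/eqP-> _]|/andP[/eqP-> hodd]];
    rewrite ?mulrS => E; lra.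
- move: E; subst a'.
  case/or4P: hok => [/eqP->|/eqP->|/andP[/eqP-> hodd]|/andP[/eqP-> hodd]];
    rewrite ?mulrS => E; try lra.
  by move: hodd; rewrite eqxx.
Qed.


Lemma wdeg_eq (R : realFieldType) (d1 d2 : R) (T : finType) (e : rel T) I1 H x :
  wdeg e (wt d1 d2 e I1 H) x = d2 *+ acnt e I1 H x - d1 *+ bcnt e I1 H x.
Proof.
rewrite /wdeg (bigID (spec e I1 H x)) /=.
rewrite (eq_bigr (fun _ => - d1)); last by move=> y /andP[_ hs]; rewrite /wt hs.
rewrite (eq_bigr (fun y => if [set x; y] \in H then d2 else 0)); last first.
  by move=> y /andP[_ /negbTE hs]; rewrite /wt hs.
rewrite -big_mkcondr.
have E1 : \sum_(i | e x i && spec e I1 H x i) (- d1) = (- d1) *+ bcnt e I1 H x.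
  by rewrite /bcnt -sumr_const; apply: eq_bigl => y; rewrite inE.
have E2 : \sum_(i | e x i && ~~ spec e I1 H x i && ([set x; i] \in H)) d2 = d2 *+ acnt e I1 H x.
  by rewrite /acnt -sumr_const; apply: eq_bigl => y; rewrite inE.
by rewrite E1 E2 mulNrn addrC.
Qed.

Lemma edge_ok (R : realFieldType) (d1 d2 : R) (T : finType) (e : rel T) (I0 I1 : {set T})
    (H : {set {set T}}) (u v : T) :
  simple_graph e -> bipartition e I0 I1 ->
  (forall v, v \in I1 -> (3 <= deg e v)%N) ->
  (forall x, defect e I1 H x -> x \in I1) ->
  (forall z z' u, z != z' -> defect e I1 H z -> defect e I1 H z' -> e z u -> e z' u -> False) ->
  0 < d1 -> d1 < d2 ->
  u \notin I1 -> e u v ->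
  wdeg e (wt d1 d2 e I1 H) u != wdeg e (wt d1 d2 e I1 H) v.
Proof.
move=> sg bp hdeg gI g2 h1 h12 nu euv.
have [esy eirr] := sg.
have vI : v \in I1 by move: (bip bp euv); rewrite (negbTE nu) => /esym/negbFE.
have nDI0 : forall y, y \notin I1 -> ~~ defect e I1 H y.
  by move=> y yn; apply/negP => /gI; rewrite (negbTE yn).
have nDu := nDI0 u nu.
have oddu : odd (degH e H u) = false.
  by move: nDu; rewrite /defect (negbTE nu) addbF => /negbTE.
have spec_I0 : forall y, spec e I1 H u y = defect e I1 H y && insel e H y u.
  by move=> y; rewrite /spec (negbTE nDu).
have bu1 : (bcnt e I1 H u <= 1)%N.
  rewrite leqNgt; apply/negP => /card_gt1P [y1 [y2 [hy1 hy2 y12]]].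
  move: hy1 hy2; rewrite !inE !spec_I0 => /and3P[e1 dy1 _] /and3P[e2 dy2 _].
  by apply: (g2 y1 y2 u y12 dy1 dy2); rewrite esy.
have bu0 : bcnt e I1 H u = 0%N -> acnt e I1 H u = degH e H u.
  move=> /eqP; rewrite cards_eq0 => /eqP E0.
  rewrite /acnt /degH; apply: eq_card => y; rewrite !inE.
  case ey: (e u y) => //=.
  have : y \notin [set y | e u y && spec e I1 H u y] by rewrite E0 inE.
  by rewrite inE ey /= => /negbTE ->.
have spec_nb : forall y, e v y -> spec e I1 H v y = defect e I1 H v && insel e H v y.
  move=> y evy; rewrite /spec.
  have yn : y \notin I1 by rewrite -(bip bp evy) vI.
  by rewrite (negbTE (nDI0 y yn)) orbF.
rewrite !wdeg_eq; apply: key_ineq => //.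
case dv: (defect e I1 H v).
- have [p [sel_eq [hp1 hp2 hp12 hH]]] := sel_some H (hdeg v vI).
  have specv : forall y, e v y -> spec e I1 H v y = (y == p.1) || (y == p.2).
    by move=> y evy; rewrite spec_nb // dv /insel sel_eq.
  have bv : bcnt e I1 H v = 2%N.
    rewrite /bcnt (_ : [set y | _] = [set p.1; p.2]) ?cards2 ?hp12 //.
    apply/setP => y; rewrite !inE; case evy: (e v y) => /=.
      by rewrite specv.
    apply/esym/negbTE; apply/negP => /orP [/eqP E|/eqP E]; by move: evy; rewrite E ?hp1 ?hp2.
  have oddv : odd (degH e H v) = false.
    by move: dv; rewrite /defect vI addbT => /negbTE.
  have av : odd (acnt e I1 H v) = odd (degH e H v).
    have -> : degH e H v = (acnt e I1 H v +
        #|[set y | e v y && spec e I1 H v y && ([set v; y] \in H)]|)%N.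
      rewrite /degH /acnt -(cardsID [set y | spec e I1 H v y]) addnC.
      congr (_ + _)%N; apply: eq_card => y; rewrite !inE;
        by case: (e v y); case: (spec e I1 H v y); case: ([set v; y] \in H).
    case hp: ([set v; p.1] \in H).
      rewrite (_ : [set y | _] = [set p.1; p.2]) ?cards2 ?hp12 ?oddD ?addbF //.
      apply/setP => y; rewrite !inE; case evy: (e v y) => /=; last first.
        apply/esym/negbTE; apply/negP => /orP [/eqP E|/eqP E]; by move: evy; rewrite E ?hp1 ?hp2.
      rewrite specv //.
      case: (boolP ((y == p.1) || (y == p.2))) => [/orP[/eqP->|/eqP->]|_] /=; [by rewrite hp| by rewrite -hH hp| by rewrite ?andbF].
    rewrite (_ : [set y | _] = set0) ?cards0 ?addn0 //.
    apply/setP => y; rewrite !inE; case evy: (e v y) => //=.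
    rewrite specv //.
    case: (boolP ((y == p.1) || (y == p.2))) => [/orP[/eqP->|/eqP->]|_] /=; [by rewrite hp| by rewrite -hH hp| by rewrite ?andbF].
  case sv: (spec e I1 H u v).
    have : (0 < bcnt e I1 H u)%N by apply/card_gt0P; exists v; rewrite inE euv sv.
    move=> hpos; have -> : bcnt e I1 H u = 1%N by apply/eqP; rewrite eqn_leq bu1 hpos.
    by rewrite bv.
  have bu_0 : bcnt e I1 H u = 0%N.
    case: (posnP (bcnt e I1 H u)) => // /card_gt0P [y]; rewrite inE spec_I0.
    case/and3P => euy dy iy.
    have yv : y != v by apply/eqP => E; move: sv; rewrite spec_I0 -E dy iy.
    by case: (g2 y v u yv dy dv); rewrite esy.
  by rewrite bu_0 bv (bu0 bu_0) oddu av oddv.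
- have specv0 : forall y, e v y -> spec e I1 H v y = false.
    by move=> y evy; rewrite spec_nb // dv.
  have bv : bcnt e I1 H v = 0%N.
    rewrite /bcnt (_ : [set y | _] = set0) ?cards0 //.
    by apply/setP => y; rewrite !inE; case evy: (e v y) => //=; rewrite specv0.
  have av : acnt e I1 H v = degH e H v.
    rewrite /acnt /degH; apply: eq_card => y; rewrite !inE.
    by case evy: (e v y) => //=; rewrite specv0.
  have oddv : odd (degH e H v) = true.
    by move: dv; rewrite /defect vI addbT => /negbFE.
  have [bu_0|bu_1] : bcnt e I1 H u = 0%N \/ bcnt e I1 H u = 1%N.
    by move: bu1; case: (bcnt e I1 H u) => [|[|]]; auto.
    by rewrite bu_0 bv (bu0 bu_0) av oddu oddv.
  by rewrite bu_1 bv.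
Qed.

Unset Implicit Arguments.

Theorem lemma2p3 (T : finType) (e : rel T) (I0 I1 : {set T})
    (R : realFieldType) (d1 d2 : R) :
  simple_graph e ->
  bipartition e I0 I1 ->
  (forall v, v \in I1 -> (3 <= deg e v)%N) ->
  0 < d1 -> d1 < d2 ->
  exists w : T -> T -> R,
    edge_weighting e (fun x : R => (x == - d1) || (x == 0) || (x == d2)) w /\
    proper_weighting e w.
Proof.
move=> sg bp hdeg h1 h12.
have [esy eirr] := sg.
have [H [gI g2]] := good_H sg bp.
exists (wt d1 d2 e I1 H); split.
  split.
    by move=> x y; rewrite /wt /spec [[set y; x]]setUC orbC.
  move=> x y exy; rewrite /wt; case: (spec e I1 H x y); first by rewrite eqxx.
  by case: ([set x; y] \in H); rewrite eqxx ?orbT.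
move=> u v euv.
case uI: (u \in I1).
  have nv : v \notin I1 by rewrite -(bip bp euv) uI.
  rewrite eq_sym; apply: (edge_ok sg bp hdeg gI g2 h1 h12 nv).
  by rewrite esy.
by apply: (edge_ok sg bp hdeg gI g2 h1 h12 _ euv); rewrite uI.
Qed.
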